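(* Let $N\ge 1$ and let $\Sigma_N^{+}$ be the space of sequences $(x_n)_{n\in\mathbb{N}}$ with $x_n\in\{1,\dots,N\}$, with metric $d(x,y)=2^{-\min\{i:x_i\neq y_i\}}$. For $1\le i\le N$ let $W_i=\{x\in\Sigma_N^+: x_1=i\}$. Let $T:\Sigma_N^+\to\Sigma_N^+$ be a continuous surjection such that for every $1\le i\le N$ there exists $x^i\in W_i$ with $T(x^i)\in W_i$. Then there exists a continuous surjection $\widetilde T:\Sigma_N^+\to\Sigma_N^+$ such that for every $x\in\Sigma_N^+$ and every $i$, $\widetilde T(x)\in W_i$ if and only if $T(x)\in W_i$, and the orbit of every point under $\widetilde T$ is finally periodic.
   Context: The orbit of $x$ under a map $S$ is finally periodic if there exist integers $j,M>0$ with $S^{M+j}(x)=S^{j}(x)$. *)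

(* Defs.v *)
From Stdlib Require Import Reals ClassicalEpsilon.
From mathcomp Require Import all_boot.

Set Implicit Arguments.
Unset Strict Implicit.
Unset Printing Implicit Defensive.

(* Sigma_N^+ : one-sided sequences over the alphabet 'I_N = {0,...,N-1}
   (relabelling of {1,...,N}); coordinates are indexed by nat, the first
   coordinate being x 0. *)
Definition seqN (N : nat) := nat -> 'I_N.

Definition sdist (N : nat) (x y : seqN N) : R :=
  match excluded_middle_informative (exists i, x i != y i) with
  | left H => Rpow_def.pow (Rinv 2) (ex_minn H)
  | right _ => R0
  end.

Definition scontinuous (N : nat) (T : seqN N -> seqN N) : Prop :=
  forall (x : seqN N) (eps : R), Rlt R0 eps ->
    exists delta : R, Rlt R0 delta /\
      forall y : seqN N, Rlt (sdist x y) delta -> Rlt (sdist (T x) (T y)) eps.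

Definition ssurjective (N : nat) (T : seqN N -> seqN N) : Prop :=
  forall y : seqN N, exists x : seqN N, T x = y.

Definition W (N : nat) (i : 'I_N) : seqN N -> Prop := fun x => x 0%N = i.

Definition finally_periodic (A : Type) (S : A -> A) (x : A) : Prop :=
  exists j M : nat, (0 < j)%N /\ (0 < M)%N /\ iter (M + j) S x = iter j S x.

(* Main.v *)
Require Import Defs.
From Stdlib Require Import Reals ClassicalEpsilon.
From mathcomp Require Import all_boot.
From Stdlib Require Import FunctionalExtensionality Lra Lia.
From mathcomp Require Import zify.

Lemma half_pow_mono (k d : nat) :
  Rle (Rpow_def.pow (Rinv 2) (k + d)) (Rpow_def.pow (Rinv 2) k).
Proof.
elim: d => [|d IH]; first by rewrite addn0; apply: Rle_refl.
rewrite addnS /=.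
have h := pow_lt (Rinv 2) (k + d) ltac:(lra).
apply: Rle_trans IH. nra.
Qed.

Lemma half_pow_pos (k : nat) : Rlt R0 (Rpow_def.pow (Rinv 2) k).
Proof. apply: pow_lt; lra. Qed.

Lemma sdist_small (N : nat) (x y : seqN N) (k : nat) :
  Rlt (sdist x y) (Rpow_def.pow (Rinv 2) k) -> forall n, (n <= k)%N -> x n = y n.
Proof.
rewrite /sdist; case: excluded_middle_informative => [H|H] hlt n hn.
- case: (ex_minnP H) hlt => m Pm minm hlt.
  apply/eqP; apply/negPn/negP => hne.
  have hm := minm n hne.
  have := half_pow_mono m (k - m).
  have -> : (m + (k - m))%N = k by lia.
  lra.
- apply/eqP; apply/negPn/negP => hne; apply: H; by exists n.
Qed.

Lemma sdist_agree (N : nat) (x y : seqN N) (k : nat) :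
  (forall n, (n <= k)%N -> x n = y n) -> Rlt (sdist x y) (Rpow_def.pow (Rinv 2) k).
Proof.
move=> hag; rewrite /sdist; case: excluded_middle_informative => [H|H].
- case: (ex_minnP H) => m Pm minm.
  have hkm : (k < m)%N.
    rewrite ltnNge; apply/negP => hmk; by rewrite (hag m hmk) eqxx in Pm.
  have := half_pow_mono k.+1 (m - k.+1).
  have -> : (k.+1 + (m - k.+1))%N = m by lia.
  have h := half_pow_pos k. simpl. lra.
- exact: half_pow_pos.
Qed.

Lemma small_exists (eps : R) : Rlt R0 eps -> exists k, Rlt (Rpow_def.pow (Rinv 2) k) eps.
Proof.
move=> he.
have [k Hk] := pow_lt_1_zero (Rinv 2) ltac:(rewrite Rabs_pos_eq; lra) eps he.
exists k; have := Hk k (Nat.le_refl k).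
rewrite Rabs_pos_eq //; apply: Rlt_le; exact: half_pow_pos.
Qed.

Lemma scont_of (N : nat) (F : seqN N -> seqN N) :
  (forall x k, exists m, forall y, (forall n, (n <= m)%N -> x n = y n) ->
      forall n, (n <= k)%N -> F x n = F y n) -> scontinuous F.
Proof.
move=> H x eps he.
have [k hk] := small_exists _ he.
have [m hm] := H x k.
exists (Rpow_def.pow (Rinv 2) m); split; first exact: half_pow_pos.
move=> y hy.
have := sdist_agree _ _ _ _ (hm y (sdist_small _ _ _ _ hy)). lra.
Qed.

Lemma loc0 (N : nat) (T : seqN N -> seqN N) : scontinuous T ->
  forall x, exists m, forall y, (forall n, (n <= m)%N -> x n = y n) -> T y 0%N = T x 0%N.
Proof.
move=> hc x.
have [delta [hd hy]] := hc x R1 ltac:(lra).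
have [k hk] := small_exists _ hd.
exists k => y hag.
have h1 := sdist_agree _ _ _ _ hag.
have h2 := hy y ltac:(lra).
symmetry; apply: (sdist_small _ _ _ 0) => //=.
Qed.

Theorem lemma3p1 (N : nat) (hN : (1 <= N)%N) (T : seqN N -> seqN N)
  (hcont : scontinuous T) (hsurj : ssurjective T)
  (hW : forall i : 'I_N, exists xi : seqN N, W i xi /\ W i (T xi)) :
  exists Tt : seqN N -> seqN N,
    scontinuous Tt /\ ssurjective Tt /\
    (forall (x : seqN N) (i : 'I_N), W i (Tt x) <-> W i (T x)) /\
    (forall x : seqN N, finally_periodic Tt x).
Proof.
have hP : forall i : 'I_N, exists pr : seqN N * nat,
    pr.1 0%N = i /\ forall y, (forall t, (t <= pr.2)%N -> y t = pr.1 t) -> T y 0%N = i.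
  move=> i; have [xi [h1 h2]] := hW i.
  have [m hm] := loc0 _ _ hcont xi.
  exists (xi, m); split => // y hy /=.
  rewrite hm ?h2 // => n hn; by rewrite hy.
pose f i := proj1_sig (constructive_indefinite_description _ (hP i)).
have hf : forall i, (f i).1 0%N = i /\
    forall y, (forall t, (t <= (f i).2)%N -> y t = (f i).1 t) -> T y 0%N = i.
  move=> i; exact: (proj2_sig (constructive_indefinite_description _ (hP i))).
pose xi i := (f i).1.
pose L := (\max_(i : 'I_N) (f i).2).+1.
have hL : (0 < L)%N by [].
have hA : forall i y, (forall t, (t <= L)%N -> y t = xi i t) -> T y 0%N = i.
  move=> i y hy; apply: (proj2 (hf i)) => t ht; apply: hy.
  apply: (leq_trans ht); exact: (leq_trans (leq_bigmax (F:=fun j => (f j).2) i) (leqnSn _)).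
have hx0 : forall i, xi i 0%N = i by move=> i; exact: (proj1 (hf i)).
pose inC (x : seqN N) := [forall t : 'I_L.+1, x t == xi (x 0%N) t].
have inCP : forall x, reflect (forall t, (t <= L)%N -> x t = xi (x 0%N) t) (inC x).
  move=> x; apply: (iffP forallP) => [h t ht|h t].
  - exact: (eqP (h (Ordinal (ht : (t < L.+1)%N)))).
  - by apply/eqP; apply: h; rewrite -ltnS.
pose S (x : seqN N) : seqN N := fun n => if n == 0%N then x 0%N else x (n + L)%N.
pose p (i : 'I_N) : seqN N := fun n => if n == 0%N then i else xi i (1 + (n.-1) %% L)%N.
pose Tt x := if inC x then S x else p (T x 0%N).
have hp0 : forall i, p i 0%N = i by [].
have hpC : forall i, inC (p i).
  move=> i; apply/inCP => t ht; rewrite hp0 /p.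
  case: eqP => [->|/eqP tn0]; first by rewrite hx0.
  rewrite modn_small; last by lia.
  congr (xi i); lia.
have hpF : forall i, Tt (p i) = p i.
  move=> i; rewrite /Tt hpC; apply: functional_extensionality => n.
  rewrite /S; case: eqP => [->//|/eqP nn0].
  rewrite /p; have -> : (n + L == 0)%N = false by lia.
  have -> : (n + L).-1 = (n.-1 + L)%N by lia.
  by rewrite (eqP (introT eqP (modnDr _ _))) (negbTE nn0).
have hTt0 : forall x, Tt x 0%N = T x 0%N.
  move=> x; rewrite /Tt; case: (inCP x) => [h|h] //=.
  by rewrite /S /=; symmetry; apply: hA.
exists Tt; split; last split; last split.
- apply: scont_of => x k.
  have [ma hma] := loc0 _ _ hcont x.
  exists (maxn (k + L) ma) => y hy n hn.
  have hy1 : forall t, (t <= L)%N -> x t = y t.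
    move=> t ht; apply: hy; lia.
  have hCyx : inC y = inC x.
    rewrite /inC; apply: eq_forallb => t.
    by rewrite -!hy1 // -ltnS.
  rewrite /Tt hCyx; case: (inC x).
  + rewrite /S; case: eqP => _; first by rewrite hy1.
    apply: hy; lia.
  + rewrite hma // => t ht; apply: hy; lia.
- move=> y; pose i := y 0%N.
  exists (fun n => if (n <= L)%N then xi i n else y (n - L)%N).
  have hC : inC (fun n => if (n <= L)%N then xi i n else y (n - L)%N).
    apply/inCP => t ht /=; by rewrite ht hx0.
  rewrite /Tt hC; apply: functional_extensionality => n.
  rewrite /S /=; case: eqP => [->|/eqP nn0]; first by rewrite hx0.
  have -> : (n + L <= L)%N = false by lia.
  by rewrite addnK.
- move=> x i; by rewrite /W hTt0.
- move=> x.
  have iterC : forall m, (forall j, (j < m)%N -> inC (iter j Tt x)) ->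
      iter m Tt x 0%N = x 0%N /\ forall t, (0 < t)%N -> iter m Tt x t = x (m * L + t)%N.
    elim=> [|m IH] hm; first by split => // t _; rewrite mul0n add0n.
    have [IH1 IH2] := IH (fun j hj => hm j (ltnW hj)).
    rewrite iterS /Tt hm //; split; first by rewrite /S /= IH1.
    move=> t ht; rewrite /S; have -> : (t == 0%N) = false by lia.
    rewrite IH2; last by lia.
    congr x; rewrite mulSn; lia.
  case: (classic (exists m, ~~ inC (iter m Tt x))) => [[m hm]|hall].
  + exists m.+1, 1%N; split => //; split => //.
    rewrite add1n !iterS /Tt (negbTE hm) -/(Tt _).
    exact: hpF.
  + have hall' : forall m, inC (iter m Tt x).
      move=> m; apply/negPn/negP => h; apply: hall; by exists m.
    exists 1%N, 1%N; split => //; split => //.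
    suff hfix : Tt x = x by rewrite /= hfix hfix.
    rewrite /Tt (hall' 0%N) /=; apply: functional_extensionality => n.
    rewrite /S; case: eqP => [->//|/eqP nn0].
    pose q := (n.-1 %/ L)%N; pose r := (n.-1 %% L)%N.
    have hr : (r < L)%N by rewrite ltn_mod.
    have hn : n = (q * L + r.+1)%N by have := divn_eq n.-1 L; rewrite -/q -/r; lia.
    have [a1 a2] := iterC q (fun j _ => hall' j).
    have [b1 b2] := iterC q.+1 (fun j _ => hall' j).
    have e1 := (elimT (inCP _) (hall' q)) r.+1 hr.
    have e2 := (elimT (inCP _) (hall' q.+1)) r.+1 hr.
    rewrite a2 // a1 in e1; rewrite b2 // b1 in e2.
    rewrite hn e1 -e2; congr x; rewrite mulSn; lia.
Qed.
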